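(* Let $(X,\mathtt{d})$ be an instance of metric $k$-center clustering with $z$ outliers with optimal clusters $C_1,\dots,C_k$ and optimal radius $r_{\mathtt{opt}}$, and run Algorithm 1 (described in the context) with parameters $\epsilon>0$, $\eta\in(0,1/2)$, $t\in\mathbb{Z}^+$. Then in each round $j$ of the loop (Step 3), either the event $\mathtt{d}(Q_j,E)\leq 2r_{\mathtt{opt}}$ happens (with $E$ the current set before the round's sampling), or with probability at least $1-\eta$ the event $\lambda_j(E)\geq\lambda_{j-1}(E)+1$ happens.
   Context: Let $(X,\mathtt{d})$ be a finite metric space with $|X|=n$ and let $k,z$ be positive integers with $z<n$. The $k$-center clustering with $z$ outliers problem asks for $X'\subseteq X$ with $|X'|\geq n-z$ and centers $c_1,\dots,c_k\in X$ minimizing $\max_{p\in X'}\min_j\mathtt{d}(p,c_j)$; $r_{\mathtt{opt}}$ is the optimal value, $X_{\mathtt{opt}}$ a fixed optimal inlier set of size $n-z$, and $C_1,\dots,C_k$ the optimal clusters partitioning $X_{\mathtt{opt}}$, each contained in a ball of radius $r_{\mathtt{opt}}$ centered at a point of $X$. For sets $X_1,X_2\subseteq X$, $\mathtt{d}(X_1,X_2)=\min_{p\in X_1,q\in X_2}\mathtt{d}(p,q)$ and $\mathtt{d}(p,E)=\min_{q\in E}\mathtt{d}(p,q)$. Algorithm 1: Let $\gamma=z/n$, $E=\emptyset$. Set $j=1$ and add to $E$ $\frac{1}{1-\gamma}\log\frac1\eta$ vertices selected uniformly at random from $X$. Step 3: while $j<t$: set $j=j+1$; let $Q_j$ be the set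 of the $(1+\epsilon)z$ vertices of $X$ farthest from $E$; add to $E$ $\frac{1+\epsilon}{\epsilon}\log\frac1\eta$ vertices selected uniformly at random from $Q_j$. Output $E$. $\lambda_j(E)$ denotes the number of indices $l\in\{1,\dots,k\}$ with $C_l\cap E\neq\emptyset$ at the beginning of the $j$-th round of Step 3 (so $\lambda_j(E)$ vs. $\lambda_{j-1}(E)$ compares the counts after and before the sampling of round $j$). *)

(* Defs.v *)
From HB Require Import structures.
From mathcomp Require Import all_boot all_order all_algebra.
From mathcomp Require Import reals exp.
Set Implicit Arguments. Unset Strict Implicit. Unset Printing Implicit Defensive.
Import Order.TTheory GRing.Theory Num.Theory.
Local Open Scope ring_scope.

Section KCenter.
Variables (R : realType) (T : finType) (d : T -> T -> R).

Definition is_metric : Prop :=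
  [/\ forall p q, 0 <= d p q,
      forall p q, d p q = 0 <-> p = q,
      forall p q, d p q = d q p &
      forall p q r, d p r <= d p q + d q r].

(* d(p, E) = min_{q in E} d(p, q)  (E assumed nonempty; 0 if E is empty) *)
Definition dist_to (E : {set T}) (p : T) : R :=
  match [pick q in E] with
  | Some q0 => \big[Num.min/d p q0]_(q in E) d p q
  | None => 0
  end.

Definition setdist (A B : {set T}) : R :=
  match [pick pq in setX A B] with
  | Some pq0 => \big[Num.min/d pq0.1 pq0.2]_(pq in setX A B) d pq.1 pq.2
  | None => 0
  end.

(* the k-center-with-z-outliers objective of inliers Xp and centers c:
   max_{p in Xp} min_j d(p, c_j), written in unfolded form *)
Definition cost_le (k : nat) (Xp : {set T}) (c : 'I_k -> T) (r : R) : Prop :=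
  forall p, p \in Xp -> exists j, d p (c j) <= r.

Definition feasible (k z : nat) (Xp : {set T}) : Prop :=
  (#|T| - z <= #|Xp|)%N.

Definition is_opt_radius (k z : nat) (r : R) : Prop :=
  (exists (Xp : {set T}) (c : 'I_k -> T), feasible k z Xp /\ cost_le Xp c r) /\
  (forall (Xp : {set T}) (c : 'I_k -> T), feasible k z Xp ->
     exists p, p \in Xp /\ forall j, r <= d p (c j)).

Definition lambda (k : nat) (C : 'I_k -> {set T}) (E : {set T}) : nat :=
  #|[set l : 'I_k | C l :&: E != set0]|.

Definition sample_set (m : nat) (s : {ffun 'I_m -> T}) : {set T} :=
  [set s i | i : 'I_m].

(* probability, when sampling m points independently and uniformly at random
   (with replacement) from Q, that the event ev (on sample sequences) holds *)
Definition sample_prob (m : nat) (Q : {set T}) (ev : pred {ffun 'I_m -> T}) : R :=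
  #|[set s : {ffun 'I_m -> T} | [forall i, s i \in Q] && ev s]|%:R
  / (#|Q| ^ m)%:R.

End KCenter.

Definition round_samples (R : realType) (eps eta : R) : nat :=
  `|Num.ceil ((1 + eps) / eps * ln (1 / eta))|%N.

Definition Q_size (R : realType) (T : finType) (eps : R) (z : nat) : nat :=
  minn #|T| `|Num.ceil ((1 + eps) * z%:R)|%N.

(* Main.v *)
Require Import Defs.
From HB Require Import structures.
From mathcomp Require Import all_boot all_order all_algebra.
From mathcomp Require Import reals exp.
From mathcomp Require Import ring lra.
Import Order.TTheory GRing.Theory Num.Theory.
Local Open Scope ring_scope.

Lemma expn_mono (a b e : nat) : (a <= b)%N -> (a ^ e <= b ^ e)%N.
Proof. by move=> h; case: e => [|e] //; rewrite leq_exp2r. Qed.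

Lemma card_fam (aT rT : finType) (Q : {set rT}) :
  #|[set s : {ffun aT -> rT} | [forall i, s i \in Q]]| = (#|Q| ^ #|aT|)%N.
Proof.
rewrite -card_ffun_on; apply: eq_card => s; rewrite inE.
by apply/forallP/ffun_onP.
Qed.

Lemma key_ineq {R : realType} {eps eta : R} :
  0 < eps -> 0 < eta < 1 / 2 ->
  1 <= eta * (1 + eps) ^+ round_samples eps eta.
Proof.
move=> e0 /andP[h0 h1].
set m := round_samples eps eta.
have p1: 0 < 1 + eps by rewrite addr_gt0 ?ltr01.
have eta1 : eta <= 1.
  apply: ltW; apply: lt_trans h1 _.
  by rewrite ltr_pdivrMr ?ltr0n // mul1r ltr1n.
have hpos: 0 < eta * (1 + eps) ^+ m by rewrite mulr_gt0 // exprn_gt0.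
rewrite -(@ler_ln R 1 _ _ hpos) ?posrE ?ltr01 //.
rewrite ln1 lnM ?posrE ?exprn_gt0 // lnXn //.
set L := - ln eta.
have L0 : 0 <= L by rewrite /L oppr_ge0 ln_le0.
have hl : eps / (1 + eps) <= ln (1 + eps).
  have := @le_ln1Dx R (- (eps / (1 + eps))).
  have -> : 1 + - (eps / (1 + eps)) = (1 + eps)^-1.
    apply: (mulfI (x:=1+eps)); first by rewrite gt_eqF.
    rewrite mulrDr mulr1 mulrN mulrCA divff ?gt_eqF // mulr1.
    by rewrite addrK.
  rewrite lnV ?posrE //.
  have: -1 < - (eps / (1 + eps)).
    by rewrite ltrN2 ltr_pdivrMr // mul1r ltrDr ltr01.
  by move=> H /(_ H); rewrite lerN2.
have hm : (1 + eps) / eps * L <= m%:R.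
  have eL : ln (1 / eta) = L by rewrite /L div1r lnV ?posrE.
  rewrite /m /round_samples natr_absz ger0_norm; last first.
    rewrite ceil_ge0; apply: (@lt_le_trans _ _ 0); first exact: ltrN10.
    by rewrite eL mulr_ge0 // divr_ge0 // ltW.
  by apply: le_trans (ceil_ge _); rewrite eL.
set a := eps / (1 + eps) in hl.
set b := (1 + eps) / eps in hm.
have ab : a * b = 1.
  have ne1 : 1 + eps != 0 by rewrite gt_eqF.
  have ne0 : eps != 0 by rewrite gt_eqF.
  by rewrite /a /b mulrA (mulfVK ne1) (divff ne0).
have a0 : 0 <= a by rewrite /a divr_ge0 // ltW.
have b0 : 0 <= b by rewrite /b divr_ge0 // ltW.
rewrite -mulr_natr mulrC.
suff : L <= m%:R * ln (1 + eps) by rewrite -subr_ge0 /L opprK addrC.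
have l0 : 0 <= ln (1 + eps) by apply: le_trans hl.
have m0 : 0 <= (m%:R : R) by [].
have : b * L * a <= m%:R * ln (1 + eps) by apply: ler_pM => //; rewrite mulr_ge0.
by have -> : b * L * a = L by rewrite mulrAC [b * a]mulrC ab mul1r.
Qed.

Theorem lemma7 (R : realType) (T : finType) (d : T -> T -> R) (k z : nat)
    (ropt : R) (Xopt : {set T}) (C : 'I_k -> {set T}) (ctr : 'I_k -> T)
    (eps eta : R) (E Q : {set T}) :
  is_metric d ->
  (0 < k)%N -> (0 < z)%N -> (z < #|T|)%N ->
  (* optimal value and a fixed optimal solution with clusters C_1..C_k *)
  is_opt_radius d k z ropt ->
  #|Xopt| = (#|T| - z)%N ->
  (forall p, p \in Xopt <-> exists l, p \in C l) ->
  (forall l l', l != l' -> [disjoint C l & C l']) ->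
  (forall l p, p \in C l -> d p (ctr l) <= ropt) ->
  (* algorithm parameters *)
  0 < eps -> 0 < eta < 1 / 2 ->
  (* current set E at the beginning of a round of Step 3 (nonempty) *)
  E != set0 ->
  (* Q_j: the (1+eps)z vertices farthest from E *)
  #|Q| = Q_size T eps z ->
  (forall p p', p \in Q -> p' \notin Q -> dist_to d E p' <= dist_to d E p) ->
  setdist d Q E <= 2 * ropt \/
  1 - eta <= @sample_prob R T (round_samples eps eta) Q
               (fun s => (lambda C E + 1 <= lambda C (E :|: sample_set s))%N).
Proof.
move=> [d0 dE dC dT] k0 z0 zn [[Xp [c [feas cost]]] _] hX cXopt hdisj hctr
  e0 heta En0 cQ _.
have ropt0 : 0 <= ropt.
  have : (0 < #|Xp|)%N by apply: leq_trans feas; rewrite subn_gt0.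
  rewrite card_gt0 => /set0Pn [p /cost [j hj]].
  exact: le_trans (d0 _ _) hj.
case: (lerP (setdist d Q E) (2 * ropt)) => [h|hsd]; [by left|right].
have far : forall p e, p \in Q -> e \in E -> 2 * ropt < d p e.
  move=> p e pQ eE; move: hsd; rewrite /setdist.
  case: pickP => [pq0 _|/(_ (p, e))]; last by rewrite inE pQ eE.
  rewrite (bigD1 (p, e)) /=; last by rewrite inE pQ eE.
  move=> h; apply: (lt_le_trans h); by rewrite ge_min lexx.
have QT : (#|Q| < #|T|)%N.
  rewrite ltn_neqAle max_card andbT; apply/negP => /eqP hQ.
  have QeqT : Q = setT.
    apply/eqP; rewrite eqEcard subsetT cardsT hQ. by rewrite /= leqnn.
  case/set0Pn: En0 => e eE.
  have := far e e; rewrite QeqT inE => /(_ isT eE).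
  rewrite (proj2 (dE e e) erefl) ltNge => /negP; apply.
  by rewrite mulr_ge0.
have cQ' : #|Q| = `|Num.ceil ((1 + eps) * z%:R)|%N.
  move: cQ; rewrite /Q_size /minn; case: ifP => // _ h'.
  by rewrite h' ltnn in QT.
have Qge : (1 + eps) * z%:R <= #|Q|%:R.
  rewrite cQ' natr_absz ger0_norm; first exact: ceil_ge.
  rewrite ceil_ge0; apply: (@lt_le_trans _ _ 0); first exact: ltrN10.
  by rewrite mulr_ge0 // addr_ge0 // ltW.
have Qout : (#|Q :\: Xopt| <= z)%N.
  apply: leq_trans (_ : #|~: Xopt| <= z)%N.
    by apply: subset_leq_card; rewrite setDE subsetIr.
  by rewrite cardsCs setCK hX subKn // ltnW.
set m := round_samples eps eta.
set ev := (fun s : {ffun 'I_m -> T} => (lambda C E + 1 <= lambda C (E :|: sample_set s))%N).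
set B := [set s : {ffun 'I_m -> T} | [forall i, s i \in Q]].
set A := [set s : {ffun 'I_m -> T} | [forall i, s i \in Q] && ev s].
set Bad := [set s : {ffun 'I_m -> T} | [forall i, s i \in Q :\: Xopt]].
have cB : #|B| = (#|Q| ^ m)%N by rewrite card_fam card_ord.
have cBad : (#|Bad| <= z ^ m)%N.
  by rewrite card_fam card_ord; apply: expn_mono.
have sub : B \subset A :|: Bad.
  apply/subsetP => s; rewrite inE => /forallP sQ.
  case: (boolP [forall i, s i \in Q :\: Xopt]) => [hb|].
    by rewrite in_setU; apply/orP; right; rewrite inE.
  rewrite negb_forall => /existsP [i]; rewrite inE sQ andbT negbK => siX.
  rewrite in_setU; apply/orP; left; rewrite inE; apply/andP; split; first by apply/forallP.
  have [l sil] : exists l, s i \in C l by apply/cXopt.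
  rewrite /ev addn1; apply: proper_card; apply/properP; split.
    apply/subsetP => l'; rewrite !inE => /set0Pn [x]; rewrite !inE => /andP [xl xE].
    by apply/set0Pn; exists x; rewrite !inE xl xE.
  exists l.
    rewrite inE; apply/set0Pn; exists (s i); rewrite !inE sil /=.
    by apply/orP; right; apply: imset_f.
  rewrite inE negbK; apply/eqP/setP => e; rewrite !inE.
  apply/negP => /andP [el eE].
  have := far (s i) e (sQ i) eE.
  rewrite ltNge => /negP; apply.
  apply: le_trans (dT _ (ctr l) _) _.
  rewrite mulr2n mulrDl mul1r lerD // ?hctr // dC hctr //.
have cAB : (#|Q| ^ m <= #|A| + z ^ m)%N.
  rewrite -cB; apply: leq_trans (subset_leq_card sub) _.
  by rewrite cardsU; apply: leq_trans (leq_subr _ _) _; rewrite leq_add2l.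
have KI := key_ineq e0 heta.
have qpos : 0 < (#|Q|%:R : R).
  apply: lt_le_trans Qge; rewrite mulr_gt0 ?ltr0n ?addr_gt0 ?ltr01 //.
have eta0 : 0 <= eta by case/andP: heta => /ltW.
have hz : (z%:R : R) ^+ m <= eta * (#|Q|%:R) ^+ m.
  apply: le_trans (_ : (z%:R : R) ^+ m * (eta * (1 + eps) ^+ m) <= _).
    by apply: ler_peMr; rewrite ?exprn_ge0.
  rewrite mulrCA -exprMn; apply: ler_wpM2l => //.
  apply: lerXn2r.
  - by rewrite nnegrE mulr_ge0 // addr_ge0 // ltW.
  - by rewrite nnegrE.
  - by rewrite mulrC.
have cABr : (#|Q|%:R : R) ^+ m <= #|A|%:R + (z%:R) ^+ m.
  by rewrite -!natrX -natrD ler_nat.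
rewrite /sample_prob -/A natrX ler_pdivlMr ?exprn_gt0 //.
rewrite mulrBl mul1r lerBlDr; apply: le_trans cABr _.
by rewrite lerD2l.
Qed.
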